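(* Let $(X,d,G)$ be a $G$-system and $\{F_n\}$ a tempered Følner sequence of $G$. Then the maps $\mu\mapsto\overline{\mathrm{mdim}}_M(\mu,\{F_n\},d)$ and $\mu\mapsto\underline{\mathrm{mdim}}_M(\mu,\{F_n\},d)$ from $M(X,G)$ to $[0,+\infty]$ are upper semi-continuous (with respect to the weak* topology).
   Context: $G$ is a countably infinite discrete amenable group; $(X,d,G)$ a compact metric space with continuous $G$-action by homeomorphisms. Følner: nonempty finite $F_n$ with $|gF_n\triangle F_n|/|F_n|\to0$; tempered: $|\bigcup_{j<n}F_j^{-1}F_n|\le C|F_n|$ for some $C>0$. $M(X,G)$: invariant Borel probability measures (weak* ); $E(X,G)$: ergodic ones; $\mathrm{co}(E(X,G))$: finite convex combinations, uniquely written $\mu=\sum_j\lambda_j\mu_j$ with distinct ergodic $\mu_j$, $\lambda_j>0$. For a finite Borel partition $\alpha$, $h_\nu(G,\alpha)=\lim_n\frac1{|F_n|}H_\nu(\bigvee_{g\in F_n}g^{-1}\alpha)$; for ergodic $\nu$, $h_\nu(\epsilon)=\inf\{h_\nu(G,\alpha):\mathrm{diam}(\alpha)\le\epsilon\}$; $F(\mu,\epsilon)=\sum_j\lambda_jh_{\mu_j}(\epsilon)$. $M_G(\mu)$: families $(\mu_\epsilon)_{\epsilon>0}\subset\mathrm{co}(E(X,G))$ with $\mu_\epsilon\to\mu$ weak* as $\epsilon\to0$. $\overline{\mathrm{mdim}}_M(\mu,\{F_n\},d)=\sup_{(\mu_\epsilon)\in M_G(\mu)}\limsup_{\epsilon\to0}F(\mu_\epsilon,\epsilon)/\log\frac1\epsilon$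 and $\underline{\mathrm{mdim}}_M(\mu,\{F_n\},d)$ is the same with $\liminf_{\epsilon\to0}$. (The paper allows equivalent choices of measure-theoretic $\epsilon$-entropy along $\{F_n\}$, e.g. upper Katok $\epsilon$-entropy, in place of $h_\nu(\epsilon)$.) *)

(* Defs.v *)
From HB Require Import structures.
From mathcomp Require Import all_boot all_order all_algebra.
From mathcomp Require Import monoid.
From mathcomp Require Import all_classical all_reals all_analysis.

Set Implicit Arguments.
Unset Strict Implicit.
Unset Printing Implicit Defensive.

Import Order.TTheory GRing.Theory Num.Theory.
Import numFieldNormedType.Exports.
Local Open Scope classical_set_scope.
Local Open Scope ring_scope.

(* A finite subset of G is encoded as a duplicate-free sequence.            *)

Section Group.
Variable G : groupType.

Definition gmul (g h : G) : G := monoid.mul g h.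
Definition ginv (g : G) : G := monoid.inv g.
Definition gone : G := monoid.one.

Definition ltrans (g : G) (F : seq G) : seq G := undup [seq gmul g x | x <- F].

Definition card_symdiff_trans (g : G) (F : seq G) : nat :=
  size ([seq x <- ltrans g F | x \notin F] ++ [seq x <- F | x \notin ltrans g F]).

Definition Folner (R : realType) (F : nat -> seq G) : Prop :=
  (forall n, uniq (F n)) /\ (forall n, F n != [::]) /\
  forall g : G,
    (fun n => ((card_symdiff_trans g (F n))%:R / (size (F n))%:R : R))
      @ \oo --> (0 : R).

Definition card_tempered_union (F : nat -> seq G) (n : nat) : nat :=
  size (undup (flatten
    [seq [seq gmul (ginv a) b | a <- F j, b <- F n] | j <- iota 0 n])).

Definition tempered (R : realType) (F : nat -> seq G) : Prop :=
  exists C : R, 0 < C /\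
    forall n, ((card_tempered_union F n)%:R <= C * (size (F n))%:R).

End Group.

Definition borel_type (X : ptopologicalType) := g_sigma_algebraType (@open X).

Definition is_metric_of (R : realType) (X : ptopologicalType)
    (d : X -> X -> R) : Prop :=
  [/\ forall x y, d x y = 0 <-> x = y,
      forall x y, d x y = d y x,
      forall x y z, d x z <= d x y + d y z &
      forall x : X, nbhs x = filter_from [set r : R | 0 < r]
                               (fun r => [set y | d x y < r])].

Definition G_system (R : realType) (G : groupType) (X : ptopologicalType)
    (d : X -> X -> R) (act : G -> X -> X) : Prop :=
  [/\ compact [set: X], is_metric_of d,
      forall x, act (gone G) x = x,
      forall g h x, act (gmul g h) x = act g (act h x) &
      forall g, continuous (act g)].

Section System.
Variables (R : realType) (G : groupType) (X : ptopologicalType).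
Variables (d : X -> X -> R) (act : G -> X -> X).
Local Notation XB := (borel_type X).
Local Notation prob := (probability XB R).

Definition invariant (mu : prob) : Prop :=
  forall (g : G) (A : set XB), measurable A -> mu (act g @^-1` A) = mu A.

Definition ergodic (mu : prob) : Prop :=
  invariant mu /\
  forall A : set XB, measurable A ->
    (forall g : G, act g @^-1` A = A) -> mu A = 0%E \/ mu A = 1%E.

Definition partition (alpha : seq (set XB)) : Prop :=
  [/\ forall i, (i < size alpha)%N -> measurable (nth set0 alpha i),
      forall i j, (i < size alpha)%N -> (j < size alpha)%N -> i <> j ->
         nth set0 alpha i `&` nth set0 alpha j = set0 &
      \bigcup_(i in [set i | (i < size alpha)%N]) nth set0 alpha i = setT].

Definition diam (A : set X) : \bar R :=
  ereal_sup [set (d p.1 p.2)%:E | p in A `*` A].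

Definition partition_diam_le (alpha : seq (set XB)) (eps : R) : Prop :=
  forall i, (i < size alpha)%N -> (diam (nth set0 alpha i) <= eps%:E)%E.

Definition xlnx (x : R) : R := if x == 0 then 0 else x * ln x.

(* H_nu( \bigvee_{g in F} g^{-1} alpha ); the atoms of the join are the
   \bigcap_{g in F} g^{-1} A_{c(g)} for c : F -> alpha *)
Definition H_join (nu : prob) (alpha : seq (set XB)) (F : seq G) : R :=
  - \sum_(c : {ffun 'I_(size F) -> 'I_(size alpha)})
      xlnx (fine (nu (\bigcap_(i in [set: 'I_(size F)])
                        (act (nth (gone G) F i) @^-1` nth set0 alpha (c i))))).

Definition h_part (F : nat -> seq G) (nu : prob) (alpha : seq (set XB)) : R :=
  limn (fun n => (size (F n))%:R^-1 * H_join nu alpha (F n)).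

Definition h_eps (F : nat -> seq G) (nu : prob) (eps : R) : \bar R :=
  ereal_inf [set (h_part F nu alpha)%:E |
               alpha in [set alpha | partition alpha /\
                                     partition_diam_le alpha eps]].

Definition ergodic_decomposition (mu : prob) (k : nat)
    (lambda : 'I_k -> R) (mus : 'I_k -> prob) : Prop :=
  [/\ forall j, 0 < lambda j,
      forall j, ergodic (mus j),
      forall i j, i <> j -> exists A : set XB, measurable A /\ mus i A <> mus j A &
      forall A : set XB, measurable A ->
        mu A = (\sum_(j < k) (lambda j)%:E * mus j A)%E].

Definition in_co_ergodic (mu : prob) : Prop :=
  exists k lambda mus, @ergodic_decomposition mu k lambda mus.

(* F(mu, eps) = \sum_j lambda_j h_{mu_j}(eps); the decomposition is unique,
   so the supremum below ranges over a single value (up to reindexing). *)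
Definition Fmu (F : nat -> seq G) (mu : prob) (eps : R) : \bar R :=
  ereal_sup [set s | exists k lambda mus,
     @ergodic_decomposition mu k lambda mus /\
     s = (\sum_(j < k) (lambda j)%:E * h_eps F (mus j) eps)%E].

Definition weak_star_cvg0 (mus : R -> prob) (mu : prob) : Prop :=
  forall f : X -> R, continuous f ->
    (fun eps => (\int[mus eps]_x (f x)%:E)%E) @ 0^'+ -->
      (\int[mu]_x (f x)%:E)%E.

Definition MG (mu : prob) : set (R -> prob) :=
  [set mus | (forall eps, 0 < eps -> in_co_ergodic (mus eps)) /\
             weak_star_cvg0 mus mu].

Definition limsup0 (u : R -> \bar R) : \bar R :=
  ereal_inf [set ereal_sup [set u e | e in [set e | 0 < e < delta]]
            | delta in [set delta : R | 0 < delta]].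

Definition liminf0 (u : R -> \bar R) : \bar R :=
  ereal_sup [set ereal_inf [set u e | e in [set e | 0 < e < delta]]
            | delta in [set delta : R | 0 < delta]].

Definition mdim_ratio (F : nat -> seq G) (mus : R -> prob) (eps : R) : \bar R :=
  (Fmu F (mus eps) eps * ((ln (1 / eps))^-1)%:E)%E.

Definition upper_mdim (F : nat -> seq G) (mu : prob) : \bar R :=
  ereal_sup [set limsup0 (mdim_ratio F mus) | mus in MG mu].

Definition lower_mdim (F : nat -> seq G) (mu : prob) : \bar R :=
  ereal_sup [set liminf0 (mdim_ratio F mus) | mus in MG mu].

(* upper semi-continuity on M(X,G) for the weak* topology: the sets
   { nu : |\int f_i dnu - \int f_i dmu| < delta, i < k } (f_i continuous)
   form a neighbourhood base of mu. *)
Definition weak_star_usc (Phi : prob -> \bar R) : Prop :=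
  forall mu : prob, invariant mu ->
  forall c : \bar R, (Phi mu < c)%E ->
  exists (k : nat) (f : 'I_k -> X -> R) (delta : R),
    (forall i, continuous (f i)) /\ 0 < delta /\
    forall nu : prob, invariant nu ->
      (forall i, (`| \int[nu]_x (f i x)%:E - \int[mu]_x (f i x)%:E | < delta%:E)%E) ->
      (Phi nu < c)%E.

End System.

(* Main.v *)
Require Import Defs.
From HB Require Import structures.
From mathcomp Require Import all_boot all_order all_algebra.
From mathcomp Require Import monoid.
From mathcomp Require Import all_classical all_reals all_analysis.
From mathcomp Require Import ring lra.

Set Implicit Arguments.
Unset Strict Implicit.
Unset Printing Implicit Defensive.
Import Order.TTheory GRing.Theory Num.Theory.
Import numFieldNormedType.Exports.
Local Open Scope classical_set_scope.
Local Open Scope ring_scope.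

Section Paste.
Variable R : realType.

Definition Nidx (eps : nat -> R) (e : R) : nat :=
  xget 0%N [set n | eps n.+1 < e <= eps n].

Variable eps : nat -> R.
Hypothesis decr : forall n, eps n.+1 < eps n.
Hypothesis to0 : forall e, 0 < e -> exists n, eps n < e.

Lemma eps_anti n m : (n <= m)%N -> eps m <= eps n.
Proof.
elim: m => [|m IH]; first by rewrite leqn0 => /eqP ->.
rewrite leq_eqVlt => /orP [/eqP -> //| ].
rewrite ltnS => /IH h; exact: le_trans (ltW (decr m)) h.
Qed.

Lemma Nidx_eq n e : eps n.+1 < e <= eps n -> Nidx eps e = n.
Proof.
move=> hn; rewrite /Nidx; case: xgetP; last by move=> /(_ n).
move=> k _ /andP [k1 k2].
move/andP: hn => [n1 n2].
apply/eqP; rewrite eqn_leq; apply/andP; split; rewrite leqNgt; apply/negP => h.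
- have := eps_anti h; rewrite leNgt; move/negP; apply.
  exact: lt_le_trans n1 k2.
- have := eps_anti h; rewrite leNgt; move/negP; apply.
  exact: lt_le_trans k1 n2.
Qed.

Lemma Nidx_spec e : 0 < e <= eps 0 ->
  eps (Nidx eps e).+1 < e <= eps (Nidx eps e).
Proof.
move=> /andP [e0 e1].
have ex : exists n, eps n.+1 < e.
  have [n hn] := to0 e0; exists n; exact: lt_trans (decr n) hn.
suff [k hk] : exists k, eps k.+1 < e <= eps k by rewrite (Nidx_eq hk).
pose k := ex_minn ex.
exists k; rewrite /k; case: ex_minnP => m hm hmin.
rewrite hm /=.
case: m hm hmin => [|m] hm hmin //.
rewrite leNgt; apply/negP => h.
by have := hmin m h; rewrite ltnn.
Qed.

Lemma Nidx_ge m e : 0 < e <= eps m -> (m <= Nidx eps e)%N.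
Proof.
move=> /andP [e0 em].
have e00 : e <= eps 0 by apply: le_trans em (eps_anti (leq0n m)).
have /andP [h1 h2] := Nidx_spec (introT andP (conj e0 e00)).
rewrite leqNgt; apply/negP => h.
have := eps_anti h; rewrite leNgt; move/negP; apply.
exact: lt_le_trans h1 em.
Qed.

End Paste.

Section MetricFacts.
Variables (R : realType) (X : ptopologicalType) (d : X -> X -> R).
Hypothesis dm : is_metric_of d.

Lemma d_refl x : d x x = 0.
Proof. by case: dm => H _ _ _; apply/H. Qed.

Lemma d_sym x y : d x y = d y x.
Proof. by case: dm => _ H _ _. Qed.

Lemma d_tri x y z : d x z <= d x y + d y z.
Proof. by case: dm => _ _ H _. Qed.

Lemma d_ge0 x y : 0 <= d x y.
Proof.
have := d_tri x y x; rewrite d_refl (d_sym y x) => h.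
by rewrite -(@pmulr_rge0 _ 2) // mulr2n mulrDl mul1r.
Qed.

Lemma nbhs_dE x : nbhs x = filter_from [set r : R | 0 < r] (fun r => [set y | d x y < r]).
Proof. by case: dm => _ _ _ H; apply: H. Qed.

Lemma nbhs_ball x r : 0 < r -> nbhs x [set y | d x y < r].
Proof. by move=> r0; rewrite nbhs_dE; exists r. Qed.

Lemma nbhs_dP x A : nbhs x A -> exists2 r, 0 < r & [set y | d x y < r] `<=` A.
Proof. by rewrite nbhs_dE => -[r r0 H]; exists r. Qed.

Lemma open_ball x r : open [set y | d x y < r].
Proof.
rewrite openE => y /= hy; rewrite /interior.
have h0 : 0 < r - d x y by rewrite subr_gt0.
apply: (filterS _ (nbhs_ball y h0)) => z /= hz.
by apply: le_lt_trans (d_tri x y z) _; rewrite -ltrBrDl.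
Qed.

Lemma cont_d p : continuous (d p).
Proof.
move=> x; apply/cvgrPdist_lt => e e0.
apply: filterS (nbhs_ball x e0) => y /= hy.
have h1 := d_tri p x y; have h2 := d_tri p y x; rewrite (d_sym y x) in h2.
rewrite ltr_distlC; apply/andP; split; lra.
Qed.


Lemma bigmin_le_seq (s : seq X) (r : X -> R) i :
  i \in s -> \big[Num.min/1]_(j <- s) r j <= r i.
Proof.
elim: s => // a s IH; rewrite inE big_cons => /orP [/eqP -> | /IH h].
  by rewrite ge_min lexx.
by rewrite ge_min h orbT.
Qed.

Lemma bigmin_gt0 (s : seq X) (r : X -> R) :
  (forall i, 0 < r i) -> 0 < \big[Num.min/1]_(j <- s) r j.
Proof.
move=> h; elim: s => [|a s IH]; first by rewrite big_nil.
by rewrite big_cons lt_min h IH.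
Qed.

Hypothesis Xc : compact [set: X].

Lemma cover_balls (r : X -> R) : (forall x, 0 < r x) ->
  exists s : seq X, forall x, exists2 p, p \in s & d p x < r p.
Proof.
move=> r0; have := Xc; rewrite compact_cover.
move=> /(_ X setT (fun p => [set y | d p y < r p])).
case.
- by move=> i _; apply: open_ball.
- by move=> x _; exists x => //=; rewrite d_refl.
move=> D' _ HD; exists (finmap.enum_fset D') => x.
by case: (HD x I) => p /= hp hx; exists p.
Qed.

Lemma net r : 0 < r -> exists s : seq X, forall x, exists2 p, p \in s & d p x < r.
Proof. by move=> r0; apply: (@cover_balls (fun _ => r)). Qed.

Lemma unif_cont (f : X -> R) : continuous f -> forall e, 0 < e ->
  exists2 rho, 0 < rho & forall x y, d x y < rho -> `|f x - f y| < e.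
Proof.
move=> fc e e0.
have : forall x, exists r, 0 < r /\ forall y, d x y < r + r -> `|f x - f y| < e / 2.
  move=> x; have /cvgrPdist_lt/(_ (e / 2)) := fc x.
  have e20 : 0 < e / 2 by rewrite divr_gt0.
  move=> /(_ e20) /nbhs_dP [r r0 Hr]; exists (r / 2); split; first by rewrite divr_gt0.
  by move=> y hy; apply: Hr => /=; rewrite -splitr in hy.
move=> /choice [r Hr].
have r0 : forall x, 0 < r x by move=> x; case: (Hr x).
have [s Hs] := cover_balls r0.
exists (\big[Num.min/1]_(j <- s) r j); first exact: bigmin_gt0.
move=> x y hxy; have [p ps hp] := Hs x.
have hm := bigmin_le_seq r ps.
have h1 : d p y < r p + r p.
  apply: le_lt_trans (d_tri p x y) _; apply: ler_ltD; [exact: ltW | exact: lt_le_trans hxy hm].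
have h2 : d p x < r p + r p by apply: lt_le_trans hp _; rewrite lerDl ltW.
have := (proj2 (Hr p) _ h1); have := (proj2 (Hr p) _ h2) => a b.
rewrite (splitr e); apply: le_lt_trans (ler_distD (f p) _ _) _.
by rewrite distrC; apply: ltrD.
Qed.

Lemma cont_bounded (f : X -> R) : continuous f -> exists B, 0 <= B /\ forall x, `|f x| <= B.
Proof.
move=> fc; have [rho rho0 Hr] := unif_cont fc ltr01.
have [s Hs] := net rho0.
exists (\sum_(p <- s) `|f p| + 1); split.
  by apply: addr_ge0 => //; apply: sumr_ge0.
move=> x; have [p ps hp] := Hs x.
have := Hr p x hp => h.
have e1 : `|f x| <= `|f p| + `|f p - f x|.
  by rewrite {1}(_ : f x = f p - (f p - f x)); [apply: ler_normB | ring].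
have e2 : `|f p| <= \sum_(q <- s) `|f q|.
  rewrite (big_rem p ps) /= lerDl; exact: sumr_ge0.
apply: (le_trans e1); apply: lerD => //; exact: ltW.
Qed.

Lemma cont_measurable (f : X -> R) : continuous f ->
  measurable_fun (setT : set (borel_type X)) f.
Proof.
move=> fc.
apply: (@measurability _ _ _ _ _ _ (measurable_realfun.RGenOpens.G (R:=R))).
  exact: measurable_realfun.RGenOpens.measurableE.
move=> _ [_ [x [y ->]] <-].
apply: sub_sigma_algebra.
rewrite setTI; apply: open_comp; last exact: itv_open.
by move=> z _; apply: fc.
Qed.

Lemma cont_int (P : probability (borel_type X) R) (f : X -> R) : continuous f ->
  P.-integrable setT (EFin \o f).
Proof.
move=> fc; apply: measurable_bounded_integrable => //.
- by apply: (le_lt_trans (probability_le1 P measurableT)); rewrite ltry.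
- exact: cont_measurable.
have [B [B0 HB]] := cont_bounded fc.
exists B; split; first by rewrite realE B0.
move=> M hM x _ /=; apply: le_trans (HB x) (ltW hM).
Qed.

Definition Int (P : probability (borel_type X) R) (f : X -> R) : R :=
  fine (\int[P]_x (f x)%:E)%E.

Lemma IntE (P : probability (borel_type X) R) (f : X -> R) : continuous f -> (\int[P]_x (f x)%:E)%E = (Int P f)%:E.
Proof.
move=> fc; rewrite /Int fineK //.
exact: (integrable_fin_num _ (cont_int P fc)).
Qed.

Lemma contB (f g : X -> R) : continuous f -> continuous g ->
  continuous (fun x => f x - g x).
Proof. by move=> fc gc x; apply: cvgB; [apply: fc | apply: gc]. Qed.

Lemma cont_sum (I : Type) (s : seq I) (c : I -> R) (phi : I -> X -> R) :
  (forall i, continuous (phi i)) ->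
  continuous (fun x => \sum_(i <- s) c i * phi i x).
Proof.
move=> pc; elim: s => [|a s IH].
  by under eq_fun do rewrite big_nil; move=> x; apply: cvg_cst.
under eq_fun do rewrite big_cons.
move=> x; apply: cvgD; last exact: IH.
by apply: cvgMr; apply: pc.
Qed.

Lemma IntB (P : probability (borel_type X) R) (f g : X -> R) : continuous f -> continuous g ->
  Int P (fun x => f x - g x) = Int P f - Int P g.
Proof.
move=> fc gc.
have := IntE P (contB fc gc).
rewrite (_ : (fun x => (f x - g x)%:E) = (fun x => (f x)%:E - (g x)%:E)%E); last first.
  by apply: funext => x.
rewrite integralB_EFin //; [|exact: cont_int|exact: cont_int].
by rewrite IntE // IntE // => -[<-].
Qed.

Lemma Int_sum (P : probability (borel_type X) R) (I : Type) (s : seq I) (c : I -> R) (phi : I -> X -> R) :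
  (forall i, continuous (phi i)) ->
  Int P (fun x => \sum_(i <- s) c i * phi i x) = \sum_(i <- s) c i * Int P (phi i).
Proof.
move=> pc.
have := IntE P (cont_sum (s:=s) (c:=c) pc).
under eq_fun do rewrite -sumEFin.
rewrite integral_sum //; last first.
  move=> i; rewrite (_ : (fun x => (c i * phi i x)%:E) = (fun x => (c i)%:E * (phi i x)%:E)%E) //.
  by apply: integrableZl => //; apply: cont_int.
have E1 : forall i, (\int[P]_x (c i * phi i x)%:E)%E = (c i * Int P (phi i))%:E.
  move=> i; rewrite (_ : (fun x => (c i * phi i x)%:E) = (fun x => (c i)%:E * (phi i x)%:E)%E) //.
  by rewrite integralZl //; [rewrite IntE | apply: cont_int].
under eq_bigr do rewrite E1.
by rewrite sumEFin => -[<-].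
Qed.

Lemma Int_le (P : probability (borel_type X) R) (f : X -> R) B : continuous f -> (forall x, `|f x| <= B) -> `|Int P f| <= B.
Proof.
move=> fc HB.
have B0 : 0 <= B by apply: le_trans (HB point).
suff : (`|(Int P f)%:E| <= B%:E)%E by rewrite lee_fin.
rewrite -IntE //.
apply: le_trans (le_abse_integral _ _ _) _ => //.
  by apply/measurable_realfun.measurable_EFinP; apply: cont_measurable.
apply: le_trans (integral_le_bound B%:E _ _ _ _) _ => //.
- by apply/measurable_realfun.measurable_EFinP; apply: cont_measurable.
- by apply: aeW => x _ /=; rewrite lee_fin HB.
rewrite -[leRHS]mule1; apply: lee_pmul => //.
exact: probability_le1.
Qed.


Definition rad (n : nat) : R := (n.+1%:R)^-1.

Lemma rad_gt0 n : 0 < rad n.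
Proof. by rewrite /rad invr_gt0 ltr0n. Qed.

Lemma rad_le n m : (n <= m)%N -> rad m <= rad n.
Proof.
move=> nm; rewrite /rad lef_pV2 ?posrE ?ltr0n // ler_nat; exact: nm.
Qed.

Definition netseq (n : nat) : seq X := sval (cid (net (rad_gt0 n))).

Lemma netseqP n x : exists2 p, p \in netseq n & d p x < rad n.
Proof. exact: (svalP (cid (net (rad_gt0 n))) x). Qed.

Definition pt n (j : nat) : X := nth point (netseq n) j.

Definition psi n (p : X) (x : X) : R := Num.max 0 (2 * rad n - d p x).

Definition Ssum n x : R := \sum_(j < size (netseq n)) psi n (pt n j) x.

Definition phi n (j : 'I_(size (netseq n))) (x : X) : R := psi n (pt n j) x / Ssum n x.
Arguments phi : clear implicits.

Lemma psi_ge0 n p x : 0 <= psi n p x.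
Proof. by rewrite /psi le_max lexx. Qed.

Lemma psi_cont n p : continuous (psi n p).
Proof.
move=> x; apply: (@continuous_max _ _ (fun=> 0) (fun x => 2 * rad n - d p x)).
  by apply: cvg_cst.
by apply: contB; [move=> y; apply: cvg_cst | apply: cont_d].
Qed.

Lemma cont_sum1 (I : Type) (s : seq I) (g : I -> X -> R) :
  (forall i, continuous (g i)) -> continuous (fun x => \sum_(i <- s) g i x).
Proof.
move=> pc; elim: s => [|a s IH].
  by under eq_fun do rewrite big_nil; move=> x; apply: cvg_cst.
under eq_fun do rewrite big_cons.
by move=> x; apply: cvgD; [apply: pc | apply: IH].
Qed.

Lemma Ssum_ge n x : rad n <= Ssum n x.
Proof.
have [p ps hp] := netseqP n x.
have js : (index p (netseq n) < size (netseq n))%N by rewrite index_mem.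
rewrite /Ssum (bigD1 (Ordinal js)) //=.
have -> : pt n (index p (netseq n)) = p by rewrite /pt nth_index.
have h1 : rad n <= psi n p x.
  rewrite /psi le_max; apply/orP; right.
  have := rad_gt0 n; lra.
apply: (le_trans h1); rewrite lerDl; apply: sumr_ge0 => i _; exact: psi_ge0.
Qed.

Lemma Ssum_gt0 n x : 0 < Ssum n x.
Proof. exact: lt_le_trans (rad_gt0 n) (Ssum_ge n x). Qed.

Lemma Ssum_cont n : continuous (Ssum n).
Proof. by apply: cont_sum1 => j; apply: psi_cont. Qed.

Lemma phi_cont n j : continuous (phi n j).
Proof.
move=> x; apply: continuousM; first exact: psi_cont.
apply: continuousV; first by rewrite gt_eqF // Ssum_gt0.
exact: Ssum_cont.
Qed.

Lemma phi_ge0 n j x : 0 <= phi n j x.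
Proof. by rewrite /phi divr_ge0 ?psi_ge0 // ltW // Ssum_gt0. Qed.

Lemma phi_sum1 n x : \sum_j phi n j x = 1.
Proof.
rewrite /phi -mulr_suml divff //; by rewrite gt_eqF // Ssum_gt0.
Qed.

Lemma phi_pos n j x : 0 < phi n j x -> d (pt n j) x < 2 * rad n.
Proof.
rewrite /phi pmulr_lgt0 ?invr_gt0 ?Ssum_gt0 // /psi lt_max ltxx /=.
by rewrite subr_gt0.
Qed.

Lemma approx (f : X -> R) : continuous f -> forall e, 0 < e ->
  exists n0, forall n, (n0 <= n)%N -> forall x,
    `|f x - \sum_(j < size (netseq n)) f (pt n j) * phi n j x| <= e.
Proof.
move=> fc e e0.
have [rho rho0 Hr] := unif_cont fc e0.
have [n0 hn0] : exists n0 : nat, 0 + n0.+1%:R^-1 < rho / 2.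
  by apply: ltr_add_invr; rewrite divr_gt0.
rewrite add0r in hn0.
exists n0 => n nn0 x.
have -> : f x - \sum_(j < size (netseq n)) f (pt n j) * phi n j x = \sum_(j < size (netseq n)) (f x - f (pt n j)) * phi n j x.
  rewrite -[X in X - _]mulr1 -(phi_sum1 n x) mulr_sumr -sumrB.
  by apply: eq_bigr => j _; rewrite mulrBl.
apply: le_trans (ler_norm_sum _ _ _) _.
rewrite -[leRHS]mulr1 -(phi_sum1 n x) mulr_sumr; apply: ler_sum => j _.
rewrite normrM (ger0_norm (phi_ge0 j x)).
have [->|hp] := eqVneq (phi n j x) 0; first by rewrite !mulr0.
have hp' : 0 < phi n j x by rewrite lt_def hp phi_ge0.
apply: ler_wpM2r; first exact: phi_ge0.
apply: ltW; rewrite distrC; apply: Hr.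
apply: lt_le_trans (phi_pos hp') _.
have := rad_le nn0; rewrite /rad in hn0 *; move: (n.+1%:R^-1) (n0.+1%:R^-1) hn0 => a b; lra.
Qed.


Lemma compare (P Q : probability (borel_type X) R) (f : X -> R) n (e B delta : R) :
  continuous f ->
  (forall x, `|f x| <= B) ->
  (forall x, `|f x - \sum_(j < size (netseq n)) f (pt n j) * phi n j x| <= e) ->
  (forall j, `|Int P (phi n j) - Int Q (phi n j)| <= delta) ->
  `|Int P f - Int Q f| <= e + e + (size (netseq n))%:R * (B * delta).
Proof.
move=> fc HB Ha Hd.
pose g x := \sum_(j < size (netseq n)) f (pt n j) * phi n j x.
have gc : continuous g by apply: cont_sum => j; apply: phi_cont.
have EP := IntB P fc gc; have EQ := IntB Q fc gc.
have eP : `|Int P (fun x => f x - g x)| <= e by apply: Int_le => //; apply: contB.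
have eQ : `|Int Q (fun x => f x - g x)| <= e by apply: Int_le => //; apply: contB.
have eg : `|Int P g - Int Q g| <= (size (netseq n))%:R * (B * delta).
  rewrite /g !Int_sum; last 2 first.
  - by move=> j; apply: phi_cont.
  - by move=> j; apply: phi_cont.
  rewrite -sumrB; apply: le_trans (ler_norm_sum _ _ _) _.
  rewrite -[X in X%:R * _]card_ord -sum1_card natr_sum mulr_suml.
  apply: ler_sum => j _; rewrite -mulrBr normrM mul1r.
  apply: ler_pM => //; exact: HB.
have -> : Int P f - Int Q f =
    (Int P (fun x => f x - g x) - Int Q (fun x => f x - g x)) + (Int P g - Int Q g).
  rewrite EP EQ; ring.
apply: le_trans (ler_normD _ _) _; apply: lerD => //.
by apply: le_trans (ler_normB _ _) _; apply: lerD.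
Qed.


Lemma rad_to0 e : 0 < e -> exists n, rad n < e.
Proof.
move=> e0; have [n hn] := ltr_add_invr e0; exists n; rewrite add0r in hn; exact: hn.
Qed.

Lemma paste_cvg (mu : probability (borel_type X) R) (nu : nat -> probability (borel_type X) R)
  (m : nat -> R -> probability (borel_type X) R) (eps dl : nat -> R) :
  (forall n, eps n.+1 < eps n) -> (forall n, 0 < eps n) -> (forall n, eps n <= rad n) ->
  (forall n j, `|Int (nu n) (phi n j) - Int mu (phi n j)| <= dl n) ->
  (forall n e, 0 < e <= eps n -> forall j,
      `|Int (m n e) (phi n j) - Int (nu n) (phi n j)| <= dl n) ->
  (forall n, (size (netseq n))%:R * dl n <= rad n) ->
  weak_star_cvg0 (fun e => m (Nidx eps e) e) mu.
Proof.
move=> decr eps0 epsr Hnu Hm Hdl f fc.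
have to0 : forall e, 0 < e -> exists n, eps n < e.
  by move=> e e0; have [n hn] := rad_to0 e0; exists n; exact: le_lt_trans (epsr n) hn.
rewrite IntE //; apply: cvg_EFin.
  by apply: filterE => e; rewrite IntE.
rewrite (_ : (fine \o _) = (fun e => Int (m (Nidx eps e) e) f)); last first.
  by apply: funext => e /=; rewrite IntE.
apply/cvgrPdist_le => eta eta0.
have [B [B0 HB]] := cont_bounded fc.
have eta40 : 0 < eta / 4 by rewrite divr_gt0.
have [n0 Hn0] := approx fc eta40.
have B10 : 0 < B + 1 by rewrite ltr_wpDl.
have [n1 Hn1] := rad_to0 (divr_gt0 eta40 B10).
pose N := maxn n0 n1.
apply: filterS2 (nbhs_right_gt 0) (nbhs_right_le (eps0 N)) => e e0 eN.
pose k := Nidx eps e.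
have kN : (N <= k)%N by apply: (Nidx_ge decr to0); rewrite e0 eN.
have e00 : e <= eps 0 by apply: le_trans eN (eps_anti decr (leq0n N)).
have /andP [_ ek] := Nidx_spec decr to0 (introT andP (conj e0 e00)).
have hc := @compare (m k e) mu f k (eta / 4) B (dl k + dl k) fc HB (Hn0 k (leq_trans (leq_maxl _ _) kN)).
have hc' : `|Int (m k e) f - Int mu f| <= eta / 4 + eta / 4 + (size (netseq k))%:R * (B * (dl k + dl k)).
  apply: hc => j; rewrite -[X in `|X|](subrKA (Int (nu k) (phi k j))).
  have hm := Hm k e (introT andP (conj e0 ek)) j.
  apply: le_trans (ler_normD _ _) _; apply: lerD; [exact: hm | exact: Hnu].
rewrite distrC; apply: le_trans hc' _.
have rk : rad k <= rad n1 by apply: rad_le; apply: leq_trans (leq_maxr _ _) kN.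
have h1 : (size (netseq k))%:R * (B * (dl k + dl k)) <= 2 * B * rad k.
  have -> : (size (netseq k))%:R * (B * (dl k + dl k)) = 2 * B * ((size (netseq k))%:R * dl k) by ring.
  by apply: ler_wpM2l; [rewrite mulr_ge0 | exact: Hdl].
have h2 : 2 * B * rad k <= eta / 2.
  have : rad k < eta / 4 / (B + 1) by apply: le_lt_trans rk Hn1.
  rewrite ltr_pdivlMr // => h3.
  have rk0 := rad_gt0 k.
  have : B * rad k <= (B + 1) * rad k by rewrite ler_wpM2r ?lerDl // ltW.
  rewrite mulrC in h3; nra.
lra.
Qed.


Lemma near0_ext (P : R -> Prop) : (\forall e \near 0^'+, P e) ->
  exists2 b, 0 < b & forall e, 0 < e < b -> P e.
Proof.
move=> /nbhs_ballP [b b0 Hb]; exists b => // e /andP [e0 eb].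
apply: Hb => //=; rewrite /ball /= sub0r normrN gtr0_norm //.
Qed.

Lemma ereal_between (a c : \bar R) : (a < c)%E -> exists r : R, (a < r%:E)%E /\ (r%:E < c)%E.
Proof.
case: a => [x| |]; case: c => [y| |] //=.
- rewrite lte_fin => h; exists ((x + y) / 2); rewrite !lte_fin; split; lra.
- by move=> _; exists (x + 1); rewrite lte_fin ltry; split => //; lra.
- by move=> _; exists (y - 1); rewrite lte_fin ltNyr; split => //; lra.
- by move=> _; exists 0; rewrite ltNyr ltry.
Qed.

Fixpoint bseq (pk : nat * R -> R) (bound : nat -> R) (n : nat) : R :=
  match n with
  | 0 => pk (0%N, Num.min (bound 0%N) (rad 0))
  | k.+1 => pk (k.+1, Num.min (Num.min (bound k.+1) (rad k.+1)) (bseq pk bound k))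
  end.

Lemma build_seq (Q : nat -> R -> Prop) (bound : nat -> R) :
  (forall n, 0 < bound n) ->
  (forall n dd, 0 < dd -> exists e, 0 < e < dd /\ Q n e) ->
  exists eps : nat -> R, forall n,
    [/\ 0 < eps n, eps n <= bound n, eps n <= rad n, eps n.+1 < eps n & Q n (eps n)].
Proof.
move=> b0 HQ.
have /choice [pk Hpk] : forall p : nat * R, exists e, 0 < p.2 -> 0 < e < p.2 /\ Q p.1 e.
  move=> [n dd] /=; case: (pselect (0 < dd)) => h.
    by have [e He] := HQ n dd h; exists e.
  by exists 0.
have H0 : 0 < Num.min (bound 0%N) (rad 0) by rewrite lt_min b0 rad_gt0.
have Hpos : forall n, 0 < bseq pk bound n.
  elim => [|n IH] /=.
    by have [/andP [] ] := Hpk (0%N, Num.min (bound 0%N) (rad 0)) H0.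
  have h : 0 < Num.min (Num.min (bound n.+1) (rad n.+1)) (bseq pk bound n).
    by rewrite !lt_min b0 rad_gt0 IH.
  by have [/andP [] ] := Hpk (n.+1, Num.min (Num.min (bound n.+1) (rad n.+1)) (bseq pk bound n)) h.
exists (bseq pk bound) => n; split.
- exact: Hpos.
- case: n => [|n] /=.
    have [/andP [_ h] _] := Hpk (0%N, Num.min (bound 0%N) (rad 0)) H0.
    by apply: (le_trans (ltW h)); rewrite ge_min lexx.
  have h0 : 0 < Num.min (Num.min (bound n.+1) (rad n.+1)) (bseq pk bound n).
    by rewrite !lt_min b0 rad_gt0 Hpos.
  have [/andP [_ h] _] := Hpk (n.+1, Num.min (Num.min (bound n.+1) (rad n.+1)) (bseq pk bound n)) h0.
  by apply: (le_trans (ltW h)); rewrite !ge_min lexx.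
- case: n => [|n] /=.
    have [/andP [_ h] _] := Hpk (0%N, Num.min (bound 0%N) (rad 0)) H0.
    by apply: (le_trans (ltW h)); rewrite ge_min lexx orbT.
  have h0 : 0 < Num.min (Num.min (bound n.+1) (rad n.+1)) (bseq pk bound n).
    by rewrite !lt_min b0 rad_gt0 Hpos.
  have [/andP [_ h] _] := Hpk (n.+1, Num.min (Num.min (bound n.+1) (rad n.+1)) (bseq pk bound n)) h0.
  by apply: (le_trans (ltW h)); rewrite !ge_min lexx orbT.
- rewrite [bseq _ _ n.+1]/=.
  have h0 : 0 < Num.min (Num.min (bound n.+1) (rad n.+1)) (bseq pk bound n).
    by rewrite !lt_min b0 rad_gt0 Hpos.
  have [/andP [_ h] _] := Hpk (n.+1, Num.min (Num.min (bound n.+1) (rad n.+1)) (bseq pk bound n)) h0.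
  by apply: (lt_le_trans h); rewrite !ge_min lexx !orbT.
- case: n => [|n] /=.
    by have [_ h] := Hpk (0%N, Num.min (bound 0%N) (rad 0)) H0.
  have h0 : 0 < Num.min (Num.min (bound n.+1) (rad n.+1)) (bseq pk bound n).
    by rewrite !lt_min b0 rad_gt0 Hpos.
  by have [_ h] := Hpk (n.+1, Num.min (Num.min (bound n.+1) (rad n.+1)) (bseq pk bound n)) h0.
Qed.


Lemma int_dist (P Q : probability (borel_type X) R) (f : X -> R) : continuous f ->
  (`| \int[P]_x (f x)%:E - \int[Q]_x (f x)%:E |)%E = `|Int P f - Int Q f|%:E.
Proof. by move=> fc; rewrite !IntE // -EFinB abse_EFin. Qed.

Variables (G : groupType) (act : G -> X -> X).

Lemma usc_gen (L : (R -> probability (borel_type X) R) -> \bar R) :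
  (forall (r : R) (m : nat -> R -> probability (borel_type X) R),
     (forall n, (r%:E < L (m n))%E) ->
     forall bound : nat -> R, (forall n, 0 < bound n) ->
     exists eps : nat -> R,
       (forall n, [/\ 0 < eps n, eps n <= bound n, eps n <= rad n & eps n.+1 < eps n]) /\
       (r%:E <= L (fun e => m (Nidx eps e) e))%E) ->
  weak_star_usc act (fun mu => ereal_sup [set L mus | mus in MG act mu]).
Proof.
move=> HL mu muinv c Hc.
apply: contrapT => Hno.
set Phi := (fun mu => ereal_sup [set L mus | mus in MG act mu]) in Hc Hno *.
have [r [r1 r2]] := ereal_between Hc.
pose dl n : R := rad n / ((size (netseq n))%:R + 1).
have dl0 : forall n, 0 < dl n by move=> n; rewrite divr_gt0 ?rad_gt0 // ltr_wpDl.
have Hdl : forall n, (size (netseq n))%:R * dl n <= rad n.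
  move=> n; rewrite /dl mulrCA ger_pMr ?rad_gt0 // ler_pdivrMr ?ltr_wpDl // mul1r lerDl //.
have Hn : forall n, exists nu, [/\ Defs.invariant act nu,
    forall j, `|Int nu (phi n j) - Int mu (phi n j)| <= dl n & (c <= Phi nu)%E].
  move=> n; apply: contrapT => H; apply: Hno.
  exists (size (netseq n)), (phi n), (dl n); split; first by move=> j; apply: phi_cont.
  split; first exact: dl0.
  move=> nu nuinv Hclose; rewrite ltNge; apply/negP => hc; apply: H.
  exists nu; split; [done | | exact: hc].
  move=> j; apply: ltW; rewrite -lte_fin -int_dist; [exact: Hclose | exact: phi_cont].
have /choice [nu Hnu] := Hn.
have Hm : forall n, exists mus, MG act (nu n) mus /\ (r%:E < L mus)%E.
  move=> n; have [_ _ hc] := Hnu n.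
  have : (r%:E < Phi (nu n))%E by apply: lt_le_trans r2 hc.
  by move=> /ereal_sup_gt [_ [mus hmus <-] hr]; exists mus.
have /choice [m Hmm] := Hm.
have Hb : forall n, exists b, 0 < b /\ forall e, 0 < e < b -> forall j,
    `|Int (m n e) (phi n j) - Int (nu n) (phi n j)| <= dl n.
  move=> n; have [[_ hcv] _] := Hmm n.
  suff : \forall e \near 0^'+, forall j,
      `|Int (m n e) (phi n j) - Int (nu n) (phi n j)| <= dl n.
    by move=> /near0_ext [b b0 hb]; exists b.
  apply: filter_forall => j.
  have := hcv (phi n j) (@phi_cont n j).
  rewrite IntE; last exact: phi_cont.
  move=> /fine_cvgP [_ hf].
  have : (fun e => Int (m n e) (phi n j)) @ 0^'+ --> Int (nu n) (phi n j).
    by move: hf; congr (_ --> _); apply: funext => e /=; rewrite /Int.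
  move=> /cvgrPdist_le /(_ _ (dl0 n)).
  by apply: filterS => e; rewrite distrC.
have /choice [b Hbb] := Hb.
have b20 : forall n, 0 < b n / 2 by move=> n; rewrite divr_gt0 // (proj1 (Hbb n)).
have [eps [Heps HLM]] := HL r m (fun n => proj2 (Hmm n)) (fun n => b n / 2) b20.
pose M := fun e => m (Nidx eps e) e.
have MGM : MG act mu M.
  split.
  - by move=> e e0; have [[h _] _] := Hmm (Nidx eps e); exact: h.
  - apply: (@paste_cvg mu nu m eps dl) => //.
    + by move=> n; case: (Heps n).
    + by move=> n; case: (Heps n).
    + by move=> n; case: (Heps n).
    + by move=> n j; case: (Hnu n).
    + move=> n e /andP [e0 en] j; apply: (proj2 (Hbb n)); rewrite e0 /=.
      have [_ h _ _] := Heps n; have := proj1 (Hbb n).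
      move: (b n) h => bb h hb; lra.
have : (L M <= Phi mu)%E by apply: ereal_sup_ubound; exists M.
move=> h; have := le_lt_trans (le_trans HLM h) r1.
by rewrite ltxx.
Qed.


Lemma HL_limsup (H : probability (borel_type X) R -> R -> \bar R) :
  forall (r : R) (m : nat -> R -> probability (borel_type X) R),
     (forall n, (r%:E < limsup0 (fun e => H (m n e) e))%E) ->
     forall bound : nat -> R, (forall n, 0 < bound n) ->
     exists eps : nat -> R,
       (forall n, [/\ 0 < eps n, eps n <= bound n, eps n <= rad n & eps n.+1 < eps n]) /\
       (r%:E <= limsup0 (fun e => H (m (Nidx eps e) e) e))%E.
Proof.
move=> r m Hm bound b0.
have HQ : forall n dd, 0 < dd -> exists e, 0 < e < dd /\ (r%:E < H (m n e) e)%E.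
  move=> n dd dd0.
  have h1 := Hm n.
  have h2 : (limsup0 (fun e => H (m n e) e) <=
      ereal_sup [set H (m n e) e | e in [set e : R | (0 < e < dd)%R]])%E.
    by apply: ereal_inf_lbound; exists dd.
  have := lt_le_trans h1 h2.
  by move=> /ereal_sup_gt [_ [e he <-] hr]; exists e.
have [eps Heps] := build_seq b0 HQ.
exists eps; split; first by move=> n; case: (Heps n).
have decr : forall n, eps n.+1 < eps n by move=> n; case: (Heps n).
apply/ereal_infP => _ [dd /= dd0 <-].
have [n hn] := rad_to0 dd0.
have [e0 _ er _ hQ] := Heps n.
have hN : Nidx eps (eps n) = n by apply: Nidx_eq => //; rewrite decr lexx.
apply: le_trans (ltW hQ) _; apply: ereal_sup_ubound; exists (eps n).
  by rewrite /= e0 /=; apply: le_lt_trans er hn.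
by rewrite hN.
Qed.

Lemma HL_liminf (H : probability (borel_type X) R -> R -> \bar R) :
  forall (r : R) (m : nat -> R -> probability (borel_type X) R),
     (forall n, (r%:E < liminf0 (fun e => H (m n e) e))%E) ->
     forall bound : nat -> R, (forall n, 0 < bound n) ->
     exists eps : nat -> R,
       (forall n, [/\ 0 < eps n, eps n <= bound n, eps n <= rad n & eps n.+1 < eps n]) /\
       (r%:E <= liminf0 (fun e => H (m (Nidx eps e) e) e))%E.
Proof.
move=> r m Hm bound b0.
have HQ : forall n dd, 0 < dd -> exists e, 0 < e < dd /\
    (forall e', 0 < e' <= e -> (r%:E < H (m n e') e')%E).
  move=> n dd dd0.
  have := Hm n; move=> /ereal_sup_gt [_ [dn /= dn0 <-] hr].
  exists (Num.min dd dn / 2); split.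
    have hm : 0 < Num.min dd dn by rewrite lt_min dd0 dn0.
    have : Num.min dd dn <= dd by rewrite ge_min lexx.
    move: (Num.min dd dn) hm => t ht htd; apply/andP; split; lra.
  move=> e' /andP [e'0 e'le].
  apply: lt_le_trans hr _; apply: ereal_inf_lbound; exists e' => //.
  rewrite /= e'0 /=.
  have hm : 0 < Num.min dd dn by rewrite lt_min dd0 dn0.
  have : Num.min dd dn <= dn by rewrite ge_min lexx orbT.
  move: (Num.min dd dn) hm e'le => t ht hte htd; lra.
have [eps Heps] := build_seq b0 HQ.
exists eps; split; first by move=> n; case: (Heps n).
have decr : forall n, eps n.+1 < eps n by move=> n; case: (Heps n).
have to0 : forall e, 0 < e -> exists n, eps n < e.
  move=> e e0; have [n hn] := rad_to0 e0; exists n.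
  by have [_ _ h _ _] := Heps n; apply: le_lt_trans h hn.
have [ep0 _ _ _ _] := Heps 0%N.
apply: le_trans _ (ereal_sup_ubound _); last by exists (eps 0%N).
apply/ereal_infP => _ [e /= /andP [e0 e1] <-].
have /andP [_ hk] := Nidx_spec decr to0 (introT andP (conj e0 (ltW e1))).
have [_ _ _ _ hQ] := Heps (Nidx eps e).
by apply: ltW; apply: hQ; rewrite e0 hk.
Qed.

End MetricFacts.



Theorem proposition3p26 (R : realType) (G : groupType) (X : ptopologicalType)
    (d : X -> X -> R) (act : G -> X -> X) (F : nat -> seq G) :
  countable [set: G] -> infinite_set [set: G] ->
  G_system d act ->
  Folner R F -> tempered R F ->
  weak_star_usc act (upper_mdim d act F) /\
  weak_star_usc act (lower_mdim d act F).
Proof.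
move=> _ _ [Xc dm _ _ _] _ _; split.
- apply: (@usc_gen R X d dm Xc G act (fun mus => limsup0 (mdim_ratio d act F mus))).
  move=> r m Hm bound b0.
  exact: (@HL_limsup R X (fun P e => (Fmu d act F P e * ((ln (1 / e))^-1)%:E)%E) r m Hm bound b0).
- apply: (@usc_gen R X d dm Xc G act (fun mus => liminf0 (mdim_ratio d act F mus))).
  move=> r m Hm bound b0.
  exact: (@HL_liminf R X (fun P e => (Fmu d act F P e * ((ln (1 / e))^-1)%:E)%E) r m Hm bound b0).
Qed.
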